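(* Let $H$ be a complex infinite-dimensional separable Hilbert space and let $(f_n)_{n=1}^\infty$ be a frame for $H$ with optimal upper frame bound $B$ such that the series $\sum_{n=1}^\infty(B-\|f_n\|^2)$ converges. Then $(f_n)_{n=1}^\infty$ is a near-Riesz basis.
   Context: The optimal upper frame bound of a frame is the infimum of all $B$ with $\sum_n|\langle x,f_n\rangle|^2\le B\|x\|^2$ for all $x\in H$ (note $\|f_n\|^2\le B$ for all $n$). The excess of a frame is the maximal number of elements that can be deleted so that the remaining sequence is still a frame. A near-Riesz basis is a frame with finite excess. *)

(* Defs.v *)
From Stdlib Require Import Reals List.
Open Scope R_scope.

Record Cx := mkC { Re : R ; Im : R }.
Definition C0 : Cx := mkC 0 0.
Definition C1 : Cx := mkC 1 0.
Definition Cadd (a b : Cx) : Cx := mkC (Re a + Re b) (Im a + Im b).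
Definition Cmul (a b : Cx) : Cx :=
  mkC (Re a * Re b - Im a * Im b) (Re a * Im b + Im a * Re b).
Definition Cconj (a : Cx) : Cx := mkC (Re a) (- Im a).
Definition Cnorm2 (a : Cx) : R := Re a * Re a + Im a * Im a.

(** Complex inner product space (inner product linear in the first argument). *)
Record CInnerSpace := {
  V :> Type;
  vzero : V;
  vadd : V -> V -> V;
  vopp : V -> V;
  vscal : Cx -> V -> V;
  inner : V -> V -> Cx;
  vadd_assoc : forall x y z, vadd x (vadd y z) = vadd (vadd x y) z;
  vadd_comm : forall x y, vadd x y = vadd y x;
  vadd_0 : forall x, vadd x vzero = x;
  vadd_opp : forall x, vadd x (vopp x) = vzero;
  vscal_1 : forall x, vscal C1 x = x;
  vscal_mul : forall a b x, vscal (Cmul a b) x = vscal a (vscal b x);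
  vscal_addv : forall a x y, vscal a (vadd x y) = vadd (vscal a x) (vscal a y);
  vscal_addc : forall a b x, vscal (Cadd a b) x = vadd (vscal a x) (vscal b x);
  inner_add : forall x y z, inner (vadd x y) z = Cadd (inner x z) (inner y z);
  inner_scal : forall a x z, inner (vscal a x) z = Cmul a (inner x z);
  inner_conj : forall x y, inner y x = Cconj (inner x y);
  inner_pos : forall x, 0 <= Re (inner x x);
  inner_def : forall x, inner x x = C0 -> x = vzero
}.

Section H.
Variable H : CInnerSpace.

Definition hnorm (x : H) : R := sqrt (Re (inner H x x)).
Definition vsub (x y : H) : H := vadd H x (vopp H y).

Definition complete : Prop :=
  forall u : nat -> H,
    (forall eps, 0 < eps -> exists N, forall m n, (N <= m)%nat -> (N <= n)%nat ->
        hnorm (vsub (u m) (u n)) < eps) ->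
    exists l : H, forall eps, 0 < eps -> exists N, forall n, (N <= n)%nat ->
        hnorm (vsub (u n) l) < eps.

Definition separable : Prop :=
  exists d : nat -> H, forall (x : H) eps, 0 < eps -> exists n, hnorm (vsub x (d n)) < eps.

Fixpoint lincomb (v : nat -> H) (c : nat -> Cx) (n : nat) : H :=
  match n with
  | O => vzero H
  | S k => vadd H (lincomb v c k) (vscal H (c k) (v k))
  end.

Definition infinite_dimensional : Prop :=
  forall n : nat, exists v : nat -> H,
    forall c : nat -> Cx, lincomb v c n = vzero H -> forall i, (i < n)%nat -> c i = C0.

Definition coef2 (P : nat -> bool) (f : nat -> H) (x : H) (n : nat) : R :=
  if P n then Cnorm2 (inner H x (f n)) else 0.

Definition frame_on (P : nat -> bool) (f : nat -> H) : Prop :=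
  exists A B : R, 0 < A /\
    forall x : H, exists s : R,
      infinite_sum (coef2 P f x) s /\
      A * (hnorm x)^2 <= s /\ s <= B * (hnorm x)^2.

Definition frame (f : nat -> H) : Prop := frame_on (fun _ => true) f.

(** B satisfies sum_n |<x,f_n>|^2 <= B ||x||^2 for all x
    (the series has nonnegative terms, so this means bounded partial sums). *)
Definition upper_frame_bound (f : nat -> H) (B : R) : Prop :=
  forall (x : H) (N : nat),
    sum_f_R0 (coef2 (fun _ => true) f x) N <= B * (hnorm x)^2.

Definition optimal_upper_frame_bound (f : nat -> H) (B : R) : Prop :=
  (forall B', upper_frame_bound f B' -> B <= B') /\
  (forall b, (forall B', upper_frame_bound f B' -> b <= B') -> b <= B).

Definition card_le (S : nat -> bool) (N : nat) : Prop :=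
  forall l : list nat, NoDup l -> (forall n, In n l -> S n = true) -> (length l <= N)%nat.

Definition finite_excess (f : nat -> H) : Prop :=
  exists N : nat, forall S : nat -> bool,
    frame_on (fun n => negb (S n)) f -> card_le S N.

Definition near_Riesz_basis (f : nat -> H) : Prop :=
  frame f /\ finite_excess f.

End H.

(* Main.v *)
Require Import Defs.
From Stdlib Require Import Reals.
From Stdlib Require Import List Lra Lia Psatz Classical ClassicalEpsilon ZArith.
Open Scope R_scope.
Notation C0 := Defs.C0.
Notation C1 := Defs.C1.

Lemma Cx_ext (a b : Cx) : Re a = Re b -> Im a = Im b -> a = b.
Proof. destruct a, b; simpl; intros; subst; reflexivity. Qed.

Ltac cxs := unfold Cadd, Cmul, Cconj, C0, C1, Cnorm2 in *; simpl in *.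

Definition rs (t : R) : Cx := mkC t 0.
Definition nsq {H : CInnerSpace} (x : H) : R := Re (inner H x x).

Lemma Cadd_cancel (a : Cx) : Cadd a a = a -> a = C0.
Proof. destruct a; cxs; intro E; injection E; intros; apply Cx_ext; simpl; lra. Qed.

Lemma vadd_cancel {H : CInnerSpace} (x : H) : vadd H x x = x -> x = vzero H.
Proof.
  intro E. rewrite <- (vadd_opp H x). rewrite <- E at 2.
  rewrite <- vadd_assoc, vadd_opp, vadd_0. reflexivity.
Qed.

Lemma inner_zero_l {H : CInnerSpace} (z : H) : inner H (vzero H) z = C0.
Proof. apply Cadd_cancel. rewrite <- inner_add, vadd_0. reflexivity. Qed.

Lemma inner_zero_r {H : CInnerSpace} (z : H) : inner H z (vzero H) = C0.
Proof. rewrite inner_conj, inner_zero_l. apply Cx_ext; cxs; lra. Qed.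

Lemma inner_add_r {H : CInnerSpace} (x y z : H) :
  inner H x (vadd H y z) = Cadd (inner H x y) (inner H x z).
Proof.
  rewrite inner_conj, inner_add, (inner_conj H y x), (inner_conj H z x).
  destruct (inner H x y), (inner H x z). apply Cx_ext; cxs; lra.
Qed.

Lemma inner_scal_r {H : CInnerSpace} (a : Cx) (x z : H) :
  inner H x (vscal H a z) = Cmul (Cconj a) (inner H x z).
Proof.
  rewrite inner_conj, inner_scal, (inner_conj H z x).
  destruct (inner H x z), a. apply Cx_ext; cxs; ring.
Qed.

Lemma inner_opp_l {H : CInnerSpace} (x z : H) :
  inner H (vopp H x) z = Cmul (rs (-1)) (inner H x z).
Proof.
  assert (E : Cadd (inner H x z) (inner H (vopp H x) z) = C0).
  { rewrite <- inner_add, vadd_opp. apply inner_zero_l. }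
  revert E. destruct (inner H x z), (inner H (vopp H x) z). unfold rs; cxs.
  intro E; injection E; intros; apply Cx_ext; simpl; lra.
Qed.

Lemma inner_opp_r {H : CInnerSpace} (x z : H) :
  inner H x (vopp H z) = Cmul (rs (-1)) (inner H x z).
Proof.
  rewrite inner_conj, inner_opp_l, (inner_conj H z x).
  destruct (inner H x z). apply Cx_ext; unfold rs; cxs; ring.
Qed.

Lemma inner_self_Im {H : CInnerSpace} (x : H) : Im (inner H x x) = 0.
Proof.
  pose proof (inner_conj H x x) as E. destruct (inner H x x). cxs.
  injection E; intros; lra.
Qed.

Lemma nsq_nonneg {H : CInnerSpace} (x : H) : 0 <= nsq x.
Proof. apply inner_pos. Qed.

Lemma nsq_zero {H : CInnerSpace} (x : H) : nsq x = 0 -> x = vzero H.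
Proof.
  intro E. apply inner_def. apply Cx_ext. exact E. simpl. apply inner_self_Im.
Qed.

Lemma nsq_vzero {H : CInnerSpace} : nsq (vzero H) = 0.
Proof. unfold nsq. rewrite inner_zero_l. reflexivity. Qed.

Lemma hnorm2 {H : CInnerSpace} (x : H) : (hnorm H x)^2 = nsq x.
Proof. unfold hnorm. apply pow2_sqrt. apply inner_pos. Qed.

Lemma Cnorm2_conj (a : Cx) : Cnorm2 (Cconj a) = Cnorm2 a.
Proof. destruct a; cxs; ring. Qed.

Lemma Cnorm2_nonneg (a : Cx) : 0 <= Cnorm2 a.
Proof. destruct a; cxs; nra. Qed.

Lemma Re_inner_sym {H : CInnerSpace} (x y : H) : Re (inner H y x) = Re (inner H x y).
Proof. rewrite inner_conj. reflexivity. Qed.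

Lemma nsq_add {H : CInnerSpace} (x y : H) :
  nsq (vadd H x y) = nsq x + nsq y + 2 * Re (inner H x y).
Proof.
  unfold nsq. rewrite inner_add, !inner_add_r. cxs.
  rewrite (Re_inner_sym x y). ring.
Qed.

Lemma nsq_add_rs {H : CInnerSpace} (x y : H) (t : R) :
  nsq (vadd H x (vscal H (rs t) y)) = nsq x + 2 * t * Re (inner H x y) + t * t * nsq y.
Proof.
  rewrite nsq_add. unfold nsq. rewrite inner_scal, inner_scal_r, inner_scal_r.
  unfold rs. cxs.
  pose proof (inner_self_Im y). destruct (inner H y y), (inner H x y); simpl in *. subst. ring.
Qed.

Lemma vscal_zero {H : CInnerSpace} (a : Cx) : vscal H a (vzero H) = vzero H.
Proof. apply vadd_cancel. rewrite <- vscal_addv, vadd_0. reflexivity. Qed.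

Lemma vzero_add {H : CInnerSpace} (x : H) : vadd H (vzero H) x = x.
Proof. rewrite vadd_comm; apply vadd_0. Qed.


Fixpoint lsum {A : Type} (g : A -> R) (l : list A) : R :=
  match l with nil => 0 | a :: l' => g a + lsum g l' end.

Fixpoint proj {H : CInnerSpace} (ys : list H) (x : H) : H :=
  match ys with
  | nil => vzero H
  | y :: ys' => vadd H (vscal H (inner H x y) y) (proj ys' x)
  end.

Inductive ON {H : CInnerSpace} : list H -> Prop :=
| ON_nil : ON nil
| ON_cons u ys : ON ys -> (forall y, In y ys -> inner H u y = C0) ->
    inner H u u = C1 -> ON (u :: ys).

Inductive spanned {H : CInnerSpace} (L : list H) : H -> Prop :=
| sp_base x : In x L -> spanned L x
| sp_zero : spanned L (vzero H)
| sp_add x y : spanned L x -> spanned L y -> spanned L (vadd H x y)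
| sp_opp x : spanned L x -> spanned L (vopp H x)
| sp_scal a x : spanned L x -> spanned L (vscal H a x).

Lemma proj_inner_orth {H : CInnerSpace} (ys : list H) (x w : H) :
  (forall y, In y ys -> inner H y w = C0) -> inner H (proj ys x) w = C0.
Proof.
  induction ys as [|y ys IH]; intro Hy; simpl.
  - apply inner_zero_l.
  - rewrite inner_add, inner_scal, Hy by (left; reflexivity).
    rewrite IH by (intros; apply Hy; right; assumption).
    destruct (inner H x y). apply Cx_ext; cxs; ring.
Qed.

Lemma conj_C0 (a : Cx) : a = C0 -> Cconj a = C0.
Proof. intros ->. apply Cx_ext; cxs; lra. Qed.

Lemma orth_sym {H : CInnerSpace} (x y : H) : inner H x y = C0 -> inner H y x = C0.
Proof. intro E. rewrite inner_conj, E. apply conj_C0; reflexivity. Qed.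

Lemma proj_inner {H : CInnerSpace} (ys : list H) (x y0 : H) :
  ON ys -> In y0 ys -> inner H (proj ys x) y0 = inner H x y0.
Proof.
  intros HO. induction HO as [|u ys HO IH Hu Huu]; intros Hin; [destruct Hin|].
  simpl. rewrite inner_add, inner_scal. destruct Hin as [<-|Hin].
  - rewrite Huu, proj_inner_orth.
    + destruct (inner H x u). apply Cx_ext; cxs; ring.
    + intros y Hy. apply orth_sym. apply Hu. exact Hy.
  - rewrite Hu by exact Hin. rewrite IH by exact Hin.
    destruct (inner H x y0), (inner H x u). apply Cx_ext; cxs; ring.
Qed.

Lemma nsq_scal {H : CInnerSpace} (a : Cx) (x : H) :
  nsq (vscal H a x) = Cnorm2 a * nsq x.
Proof.
  unfold nsq. rewrite inner_scal, inner_scal_r. pose proof (inner_self_Im x).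
  destruct (inner H x x), a; cxs; subst; ring.
Qed.

Lemma proj_nsq {H : CInnerSpace} (ys : list H) (x : H) :
  ON ys -> nsq (proj ys x) = lsum (fun y => Cnorm2 (inner H x y)) ys.
Proof.
  intros HO. induction HO as [|u ys HO IH Hu Huu]; simpl.
  - apply nsq_vzero.
  - rewrite nsq_add, nsq_scal, IH, inner_scal.
    rewrite (orth_sym _ _ (proj_inner_orth ys x u (fun y Hy => orth_sym _ _ (Hu y Hy)))).
    unfold nsq at 1. rewrite Huu. destruct (inner H x u). cxs. ring.
Qed.

Lemma spanned_orth {H : CInnerSpace} (L : list H) (r w : H) :
  (forall y, In y L -> inner H r y = C0) -> spanned L w -> inner H r w = C0.
Proof.
  intros Hr Hs. induction Hs.
  - apply Hr; assumption.
  - apply inner_zero_r.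
  - rewrite inner_add_r, IHHs1, IHHs2. apply Cx_ext; cxs; lra.
  - rewrite inner_opp_r, IHHs. apply Cx_ext; cxs; lra.
  - rewrite inner_scal_r, IHHs. destruct a; apply Cx_ext; cxs; lra.
Qed.

Lemma proj_spanned {H : CInnerSpace} (ys : list H) (x : H) : spanned ys (proj ys x).
Proof.
  induction ys as [|y ys IH]; simpl.
  - apply sp_zero.
  - apply sp_add. apply sp_scal, sp_base; left; reflexivity.
    clear -IH. induction IH.
    + apply sp_base; right; assumption.
    + apply sp_zero.
    + apply sp_add; assumption.
    + apply sp_opp; assumption.
    + apply sp_scal; assumption.
Qed.

Lemma spanned_trans {H : CInnerSpace} (L L' : list H) (w : H) :
  spanned L w -> (forall h, In h L -> spanned L' h) -> spanned L' w.
Proof.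
  intros Hs Hh. induction Hs.
  - apply Hh; assumption.
  - apply sp_zero.
  - apply sp_add; assumption.
  - apply sp_opp; assumption.
  - apply sp_scal; assumption.
Qed.

Lemma G1 {H : CInnerSpace} (p x : H) : vadd H p (vsub H x p) = x.
Proof.
  unfold vsub. rewrite vadd_comm, <- vadd_assoc, (vadd_comm H (vopp H p) p), vadd_opp, vadd_0.
  reflexivity.
Qed.

Lemma G2 {H : CInnerSpace} (x p v : H) : vsub H x v = vadd H (vsub H x p) (vsub H p v).
Proof.
  unfold vsub. rewrite <- vadd_assoc, (vadd_assoc H (vopp H p) p),
    (vadd_comm H (vopp H p) p), vadd_opp, vzero_add. reflexivity.
Qed.

Lemma resid_orth {H : CInnerSpace} (ys : list H) (x y : H) :
  ON ys -> In y ys -> inner H (vsub H x (proj ys x)) y = C0.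
Proof.
  intros HO Hy. unfold vsub. rewrite inner_add, inner_opp_l, proj_inner by assumption.
  destruct (inner H x y). apply Cx_ext; cxs; lra.
Qed.

Lemma key_ineq {H : CInnerSpace} (ys : list H) (x v : H) :
  ON ys -> spanned ys v ->
  nsq x <= lsum (fun y => Cnorm2 (inner H x y)) ys + nsq (vsub H x v).
Proof.
  intros HO Hv. set (p := proj ys x). set (r := vsub H x p).
  assert (Hr : forall w, spanned ys w -> inner H r w = C0).
  { intros w Hw. apply (spanned_orth ys); [|exact Hw]. intros y Hy. apply resid_orth; assumption. }
  assert (Hp : spanned ys p) by apply proj_spanned.
  assert (E1 : nsq x = nsq p + nsq r).
  { assert (Ex : x = vadd H p r) by (unfold r; symmetry; apply G1).
    rewrite Ex at 1. rewrite nsq_add, (orth_sym _ _ (Hr p Hp)). simpl. ring. }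
  assert (E2 : nsq (vsub H x v) = nsq r + nsq (vsub H p v)).
  { rewrite (G2 x p v). fold r. rewrite nsq_add, (Hr (vsub H p v)). simpl; ring.
    unfold vsub. apply sp_add; [exact Hp|apply sp_opp; exact Hv]. }
  pose proof (nsq_nonneg (vsub H p v)).
  rewrite E1, E2. unfold p. rewrite proj_nsq by exact HO. unfold p in *. lra.
Qed.

Lemma GS {H : CInnerSpace} (hs : list H) :
  exists ys, ON ys /\ (length ys <= length hs)%nat /\ forall h, In h hs -> spanned ys h.
Proof.
  induction hs as [|h hs IH].
  - exists nil. split; [constructor|split; [simpl; lia|intros h []]].
  - destruct IH as [ys [HO [Hl Hs]]].
    set (p := proj ys h). set (r := vsub H h p).
    assert (Hr : forall y, In y ys -> inner H r y = C0) by (intros; apply resid_orth; assumption).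
    destruct (Req_dec (nsq r) 0) as [E|E].
    + exists ys. split; [exact HO|split; [simpl; lia|]].
      intros h' [Eh|Hh']; [|apply Hs; exact Hh']. subst h'.
      apply nsq_zero in E. rewrite <- (G1 p h). fold r. rewrite E, vadd_0. apply proj_spanned.
    + assert (Hpos : 0 < nsq r) by (pose proof (nsq_nonneg r); lra).
      set (s := sqrt (nsq r)).
      assert (Hs0 : 0 < s) by (apply sqrt_lt_R0; exact Hpos).
      assert (Hss : s * s = nsq r) by (apply sqrt_sqrt; lra).
      set (u := vscal H (rs (/ s)) r).
      exists (u :: ys). split; [|split; [simpl; lia|]].
      * constructor; [exact HO| |].
        -- intros y Hy. unfold u. rewrite inner_scal, Hr by exact Hy. apply Cx_ext; cxs; ring.
        -- unfold u. rewrite inner_scal, inner_scal_r. pose proof (inner_self_Im r).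
           unfold nsq in Hss. destruct (inner H r r). apply Cx_ext; cxs; subst.
           field; lra. ring.
      * assert (Hmono : forall w, spanned ys w -> spanned (u :: ys) w).
        { intros w Hw. apply (spanned_trans ys); [exact Hw|]. intros; apply sp_base; right; assumption. }
        intros h' [Eh|Hh']; [|apply Hmono, Hs, Hh']. subst h'.
        rewrite <- (G1 p h). apply sp_add. apply Hmono, proj_spanned.
        fold r. replace r with (vscal H (rs s) u).
        -- apply sp_scal, sp_base; left; reflexivity.
        -- unfold u. rewrite <- vscal_mul. replace (Cmul (rs s) (rs (/ s))) with C1.
           apply vscal_1. apply Cx_ext; cxs; field; lra.
Qed.


Definition psum (g : nat -> R) (M : nat) : R := lsum g (seq 0 M).

Lemma lsum_app {A} (g : A -> R) l1 l2 : lsum g (l1 ++ l2) = lsum g l1 + lsum g l2.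
Proof. induction l1; simpl; [ring|rewrite IHl1; ring]. Qed.

Lemma psum_S g M : psum g (S M) = psum g M + g M.
Proof. unfold psum. rewrite seq_S, lsum_app. simpl. ring. Qed.

Lemma psum_sum g M : psum g (S M) = sum_f_R0 g M.
Proof.
  induction M. unfold psum; simpl; ring.
  rewrite psum_S, IHM. simpl. reflexivity.
Qed.

Lemma lsum_le {A} (g h : A -> R) l : (forall a, In a l -> g a <= h a) -> lsum g l <= lsum h l.
Proof.
  induction l; simpl; intros Hl; [lra|].
  pose proof (Hl a (or_introl eq_refl)). pose proof (IHl (fun b Hb => Hl b (or_intror Hb))). lra.
Qed.

Lemma lsum_nonneg {A} (g : A -> R) l : (forall a, 0 <= g a) -> 0 <= lsum g l.
Proof. intros Hg; induction l; simpl; [lra|]. pose proof (Hg a); lra. Qed.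

Lemma lsum_plus {A} (g h : A -> R) l : lsum (fun a => g a + h a) l = lsum g l + lsum h l.
Proof. induction l; simpl; [ring|rewrite IHl; ring]. Qed.

Lemma lsum_minus {A} (g h : A -> R) l : lsum (fun a => g a - h a) l = lsum g l - lsum h l.
Proof. induction l; simpl; [ring|rewrite IHl; ring]. Qed.

Lemma lsum_scal {A} (g : A -> R) c l : lsum (fun a => c * g a) l = c * lsum g l.
Proof. induction l; simpl; [ring|rewrite IHl; ring]. Qed.

Lemma lsum_const {A} c (l : list A) : lsum (fun _ => c) l = c * INR (length l).
Proof. induction l; simpl length; [simpl; ring|]. rewrite S_INR. simpl. rewrite IHl. ring. Qed.

Lemma lsum_swap {A B} (g : A -> B -> R) la lb :
  lsum (fun a => lsum (fun b => g a b) lb) la = lsum (fun b => lsum (fun a => g a b) la) lb.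
Proof.
  induction la; simpl.
  - induction lb; simpl; [reflexivity|rewrite <- IHlb; ring].
  - rewrite IHla. rewrite <- lsum_plus. reflexivity.
Qed.

Lemma lsum_ind {A} (p : A -> bool) c l :
  lsum (fun a => if p a then c else 0) l = c * INR (length (filter p l)).
Proof.
  induction l; simpl; [ring|]. destruct (p a); simpl length; [rewrite S_INR|]; rewrite IHl; ring.
Qed.

Lemma psum_nonneg g M : (forall n, 0 <= g n) -> 0 <= psum g M.
Proof. intros; apply lsum_nonneg; assumption. Qed.

Lemma psum_le_lim g l M : (forall n, 0 <= g n) -> infinite_sum g l -> psum g M <= l.
Proof.
  intros Hg Hs.
  assert (Hgr : Un_growing (sum_f_R0 g)). { intro n. simpl. pose proof (Hg (S n)). lra. }
  pose proof (growing_ineq _ _ Hgr Hs M). rewrite <- psum_sum in H.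
  rewrite psum_S in H. pose proof (Hg M). lra.
Qed.

Lemma lim_le g l K : infinite_sum g l -> (forall M, psum g M <= K) -> l <= K.
Proof.
  intros Hs HK. apply (Rle_cv_lim (Un:=sum_f_R0 g) (Vn:=fun _ => K)).
  - intro n. rewrite <- psum_sum. apply HK.
  - exact Hs.
  - intros e He. exists O. intros. unfold R_dist. rewrite Rminus_diag, Rabs_R0. exact He.
Qed.

Lemma Un_cv_ext u v l : (forall n, u n = v n) -> Un_cv u l -> Un_cv v l.
Proof. intros E Hu e He. destruct (Hu e He) as [N HN]. exists N. intros n Hn. rewrite <- E. auto. Qed.

Lemma Un_cv_const c : Un_cv (fun _ => c) c.
Proof. intros e He. exists O. intros. unfold R_dist. rewrite Rminus_diag, Rabs_R0. exact He. Qed.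

Lemma inf_sum_lin u v a b al be :
  infinite_sum u a -> infinite_sum v b ->
  infinite_sum (fun n => al * u n + be * v n) (al * a + be * b).
Proof.
  intros Hu Hv. unfold infinite_sum.
  apply (Un_cv_ext (fun N => al * sum_f_R0 u N + be * sum_f_R0 v N)).
  - intro n. rewrite sum_plus, !scal_sum. f_equal; apply sum_eq; intros; ring.
  - apply CV_plus; apply CV_mult; try apply Un_cv_const; assumption.
Qed.

Lemma inf_sum_ext u v l : (forall n, u n = v n) -> infinite_sum u l -> infinite_sum v l.
Proof.
  intros E Hu. unfold infinite_sum. apply (Un_cv_ext (sum_f_R0 u)); [|exact Hu].
  intro n. apply sum_eq. intros; apply E.
Qed.

Lemma cv_psum g l : infinite_sum g l ->
  forall e, 0 < e -> exists N, forall M, (N <= M)%nat -> Rabs (psum g M - l) < e.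
Proof.
  intros Hs e He. destruct (Hs e He) as [N HN]. exists (S N). intros M HM.
  destruct M as [|M]; [lia|]. rewrite psum_sum. apply HN. lia.
Qed.

Lemma lim_dist c C a K M0 : infinite_sum c C ->
  (forall N, (M0 <= N)%nat -> Rabs (psum c N - a) <= K) -> Rabs (C - a) <= K.
Proof.
  intros Hs HK. destruct (Rle_dec (Rabs (C - a)) K) as [h|h]; [exact h|].
  exfalso. destruct (cv_psum c C Hs (Rabs (C - a) - K)) as [N HN]; [lra|].
  pose proof (HN (Nat.max N M0) (Nat.le_max_l _ _)).
  pose proof (HK (Nat.max N M0) (Nat.le_max_r _ _)).
  pose proof (Rabs_triang (C - psum c (Nat.max N M0)) (psum c (Nat.max N M0) - a)).
  replace (C - psum c (Nat.max N M0) + (psum c (Nat.max N M0) - a)) with (C - a) in H1 by ring.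
  rewrite Rabs_minus_sym in H. lra.
Qed.


Lemma inner_self_Cnorm2 {H : CInnerSpace} (x : H) : Cnorm2 (inner H x x) = nsq x * nsq x.
Proof. unfold nsq. pose proof (inner_self_Im x). destruct (inner H x x); cxs; subst; ring. Qed.

Lemma coef_zero {H : CInnerSpace} (f : nat -> H) P n : coef2 H P f (vzero H) n = 0.
Proof. unfold coef2. rewrite inner_zero_l. destruct (P n); cxs; ring. Qed.

Lemma B_ufb {H : CInnerSpace} (f : nat -> H) B :
  optimal_upper_frame_bound H f B -> upper_frame_bound H f B.
Proof.
  intros [_ HB] x N. rewrite hnorm2.
  destruct (Req_dec (nsq x) 0) as [E|E].
  - apply nsq_zero in E. subst x. rewrite nsq_vzero.
    rewrite (sum_eq _ (fun _ => 0)) by (intros; apply coef_zero).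
    rewrite sum_cte. lra.
  - assert (Hp : 0 < nsq x) by (pose proof (nsq_nonneg x); lra).
    set (s := sum_f_R0 (coef2 H (fun _ => true) f x) N).
    assert (Hb : s / nsq x <= B).
    { apply HB. intros B' HB'. pose proof (HB' x N) as h. rewrite hnorm2 in h. fold s in h.
      apply (Rmult_le_reg_r (nsq x)); [exact Hp|]. unfold Rdiv. rewrite Rmult_assoc, Rinv_l by lra. lra. }
    apply (Rmult_le_compat_r (nsq x)) in Hb; [|lra].
    unfold Rdiv in Hb. rewrite Rmult_assoc, Rinv_l in Hb by lra. lra.
Qed.

Lemma nonzero_exists {H : CInnerSpace} : infinite_dimensional H -> exists x : H, 0 < nsq x.
Proof.
  intros Hinf. destruct (Hinf 1%nat) as [v Hv]. exists (v O).
  destruct (Req_dec (nsq (v O)) 0) as [E|E]; [|pose proof (nsq_nonneg (v O)); lra].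
  exfalso. apply nsq_zero in E.
  assert (h : C1 = C0).
  { apply (Hv (fun _ => C1)) with (i := O); [|lia]. simpl. rewrite vscal_1, E, vadd_0. reflexivity. } unfold C1, C0 in h. injection h. lra.
Qed.

Lemma frame_nsq {H : CInnerSpace} (P : nat -> bool) (f : nat -> H) :
  frame_on H P f -> exists A BP, 0 < A /\ forall x, exists s,
    infinite_sum (coef2 H P f x) s /\ A * nsq x <= s /\ s <= BP * nsq x.
Proof.
  intros [A [BP [HA Hx]]]. exists A, BP. split; [exact HA|]. intros x.
  destruct (Hx x) as [s Hs]. exists s. rewrite !hnorm2 in Hs. exact Hs.
Qed.

Lemma coef2_nonneg {H : CInnerSpace} P (f : nat -> H) x n : 0 <= coef2 H P f x n.
Proof. unfold coef2. destruct (P n); [apply Cnorm2_nonneg|lra]. Qed.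

Lemma B_pos {H : CInnerSpace} (f : nat -> H) B :
  infinite_dimensional H -> frame H f -> upper_frame_bound H f B -> 0 < B.
Proof.
  intros Hinf Hfr Hub. destruct (nonzero_exists Hinf) as [x Hx].
  destruct (frame_nsq _ _ Hfr) as [A [BP [HA Hs]]]. destruct (Hs x) as [s [Hsum [Hl _]]].
  assert (s <= B * nsq x).
  { apply (lim_le _ _ _ Hsum). intro M. destruct M as [|M].
    - unfold psum; simpl. pose proof (Hub x O) as h. rewrite hnorm2 in h. simpl in h.
      pose proof (coef2_nonneg (fun _ => true) f x O). lra.
    - rewrite psum_sum. pose proof (Hub x M) as h. rewrite hnorm2 in h. exact h. }
  assert (0 < A * nsq x) by (apply Rmult_lt_0_compat; assumption).
  destruct (Rle_or_lt B 0); [|assumption]. exfalso.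
  assert (B * nsq x <= 0) by nra. lra.
Qed.

Lemma Bupper_psum {H : CInnerSpace} (f : nat -> H) B :
  upper_frame_bound H f B -> 0 <= B ->
  forall x M, psum (fun n => Cnorm2 (inner H x (f n))) M <= B * nsq x.
Proof.
  intros Hub HB x M. destruct M as [|M].
  - unfold psum; simpl. pose proof (nsq_nonneg x). nra.
  - rewrite psum_sum. pose proof (Hub x M) as h. rewrite hnorm2 in h. exact h.
Qed.

Lemma nsq_f_le {H : CInnerSpace} (f : nat -> H) B :
  upper_frame_bound H f B -> 0 < B -> forall n, nsq (f n) <= B.
Proof.
  intros Hub HB n. pose proof (Bupper_psum f B Hub (Rlt_le _ _ HB) (f n) (S n)) as h.
  rewrite psum_S in h.
  pose proof (psum_nonneg (fun m => Cnorm2 (inner H (f n) (f m))) n (fun m => Cnorm2_nonneg _)).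
  rewrite inner_self_Cnorm2 in h. pose proof (nsq_nonneg (f n)).
  destruct (Req_dec (nsq (f n)) 0) as [E|E]; [lra|]. nra.
Qed.


Fixpoint vM {H : CInnerSpace} (P : nat -> bool) (f : nat -> H) (y : H) (M : nat) : H :=
  match M with
  | O => vzero H
  | S M' => if P M' then vadd H (vM P f y M') (vscal H (inner H y (f M')) (f M')) else vM P f y M'
  end.

Lemma vM_spanned {H : CInnerSpace} P (f : nat -> H) y M (L : list H) :
  (forall n, (n < M)%nat -> P n = true -> In (f n) L) -> spanned L (vM P f y M).
Proof.
  induction M; intros HL; simpl. apply sp_zero.
  destruct (P M) eqn:EP.
  - apply sp_add. apply IHM; intros; apply HL; [lia|assumption].
    apply sp_scal, sp_base, HL; [lia|assumption].
  - apply IHM; intros; apply HL; [lia|assumption].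
Qed.

Definition cc {H : CInnerSpace} P (f : nat -> H) (y z : H) (n : nat) : R :=
  (coef2 H P f (vadd H y z) n - coef2 H P f y n - coef2 H P f z n) / 2.

Lemma vM_inner {H : CInnerSpace} P (f : nat -> H) y z M :
  Re (inner H (vM P f y M) z) = psum (cc P f y z) M.
Proof.
  induction M; simpl. rewrite inner_zero_l. unfold psum; simpl; reflexivity.
  rewrite psum_S, <- IHM. unfold cc, coef2. destruct (P M).
  - rewrite inner_add, inner_scal, inner_add, (inner_conj H (f M) z).
    destruct (inner H y (f M)), (inner H z (f M)), (inner H (vM P f y M) z). cxs. field.
  - field.
Qed.

Lemma q_expand {H : CInnerSpace} P (f : nat -> H) y z t n :
  coef2 H P f (vadd H y (vscal H (rs t) z)) n =
  coef2 H P f y n + 2 * t * cc P f y z n + t * t * coef2 H P f z n.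
Proof.
  unfold cc, coef2. destruct (P n); [|field].
  rewrite !inner_add, inner_scal. destruct (inner H y (f n)), (inner H z (f n)). cxs. field.
Qed.

Lemma cc_bound {H : CInnerSpace} P (f : nat -> H) y z K n : 0 < K ->
  Rabs (cc P f y z n) <= K * coef2 H P f y n + coef2 H P f z n / (4 * K).
Proof.
  intros HK. unfold cc, coef2. destruct (P n).
  - rewrite !inner_add. destruct (inner H y (f n)) as [a1 a2], (inner H z (f n)) as [b1 b2]. cxs.
    replace ((((a1 + b1) * (a1 + b1) + (a2 + b2) * (a2 + b2) - (a1 * a1 + a2 * a2) -
      (b1 * b1 + b2 * b2)) / 2)) with (a1 * b1 + a2 * b2) by field.
    assert (E1 : K * (a1 * a1 + a2 * a2) + (b1 * b1 + b2 * b2) / (4 * K) - (a1 * b1 + a2 * b2)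
      = ((2*K*a1 - b1)^2 + (2*K*a2 - b2)^2) / (4 * K)) by (field; lra).
    assert (E2 : K * (a1 * a1 + a2 * a2) + (b1 * b1 + b2 * b2) / (4 * K) + (a1 * b1 + a2 * b2)
      = ((2*K*a1 + b1)^2 + (2*K*a2 + b2)^2) / (4 * K)) by (field; lra).
    assert (0 <= ((2*K*a1 - b1)^2 + (2*K*a2 - b2)^2) / (4 * K))
      by (unfold Rdiv; apply Rle_mult_inv_pos; [apply Rplus_le_le_0_compat; apply pow2_ge_0|lra]).
    assert (0 <= ((2*K*a1 + b1)^2 + (2*K*a2 + b2)^2) / (4 * K))
      by (unfold Rdiv; apply Rle_mult_inv_pos; [apply Rplus_le_le_0_compat; apply pow2_ge_0|lra]).
    apply Rabs_le. lra.
  - replace ((0 - 0 - 0) / 2) with 0 by field. rewrite Rabs_R0.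
    replace (K * 0 + 0 / (4 * K)) with 0 by (field; lra). lra.
Qed.

Lemma quad_bound (D Qz eta K n : R) : 0 < K -> 0 <= Qz -> Qz <= K * n ->
  (forall t, - eta < 2 * t * D + t * t * Qz) -> Rabs D <= eta * K + n / 4.
Proof.
  intros HK HQ HQn Ht. set (u := / (2 * K)).
  assert (Hu : 2 * K * u = 1) by (unfold u; field; lra).
  assert (Hu0 : 0 < u) by (unfold u; apply Rinv_0_lt_compat; lra).
  pose proof (Ht u) as h1. pose proof (Ht (- u)) as h2.
  assert (hA : u * u * Qz <= u * u * K * n) by (assert (0 <= u*u) by nra; nra).
  assert (hB : K * (u * u * K * n) = n / 4).
  { replace (K * (u * u * K * n)) with ((2*K*u)*(2*K*u) * n / 4) by field. rewrite Hu. field. }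
  apply Rabs_le. split.
  - assert (K * (- eta) < K * (2 * u * D + u * u * Qz)) by (apply Rmult_lt_compat_l; lra).
    assert (K * (2 * u * D) = D) by (replace (K * (2 * u * D)) with ((2*K*u) * D) by ring; rewrite Hu; ring).
    assert (K * (u * u * Qz) <= n / 4) by (rewrite <- hB; apply Rmult_le_compat_l; lra).
    nra.
  - assert (K * (- eta) < K * (2 * (- u) * D + (- u) * (- u) * Qz)) by (apply Rmult_lt_compat_l; lra).
    assert (K * (2 * u * D) = D) by (replace (K * (2 * u * D)) with ((2*K*u) * D) by ring; rewrite Hu; ring).
    assert (K * (u * u * Qz) <= n / 4) by (rewrite <- hB; apply Rmult_le_compat_l; lra).
    nra.
Qed.


Lemma tail_bound {H : CInnerSpace} P (f : nat -> H) y z K M : 0 < K -> forall d,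
  Rabs (psum (cc P f y z) (M + d) - psum (cc P f y z) M) <=
  K * (psum (coef2 H P f y) (M + d) - psum (coef2 H P f y) M) +
  (psum (coef2 H P f z) (M + d) - psum (coef2 H P f z) M) / (4 * K).
Proof.
  intros HK d. induction d.
  - rewrite Nat.add_0_r. unfold Rminus. rewrite !Rplus_opp_r, Rabs_R0. unfold Rdiv. lra.
  - rewrite Nat.add_succ_r, !psum_S.
    pose proof (cc_bound P f y z K (M + d) HK).
    pose proof (Rabs_triang (psum (cc P f y z) (M + d) - psum (cc P f y z) M) (cc P f y z (M + d))).
    replace (psum (cc P f y z) (M + d) + cc P f y z (M + d) - psum (cc P f y z) M) with
      (psum (cc P f y z) (M + d) - psum (cc P f y z) M + cc P f y z (M + d)) by ring.
    assert (E : (psum (coef2 H P f z) (M + d) + coef2 H P f z (M + d) - psum (coef2 H P f z) M) / (4 * K)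
      = (psum (coef2 H P f z) (M + d) - psum (coef2 H P f z) M) / (4 * K) + coef2 H P f z (M + d) / (4 * K))
      by (field; lra).
    rewrite E. lra.
Qed.

Lemma approx {H : CInnerSpace} (P : nat -> bool) (f : nat -> H) (A K : R) :
  0 < A -> 0 < K ->
  (forall x, exists s, infinite_sum (coef2 H P f x) s /\ A * nsq x <= s /\ s <= K * nsq x) ->
  forall (g : H) eps, 0 < eps -> exists M0, forall M, (M0 <= M)%nat ->
   exists v, (forall L, (forall n, (n < M)%nat -> P n = true -> In (f n) L) -> spanned L v)
     /\ nsq (vsub H g v) <= eps.
Proof.
  intros HA HK Hfr g eps He.
  assert (exQ : forall x, exists s, infinite_sum (coef2 H P f x) s).
  { intro x. destruct (Hfr x) as [s [Hs _]]. exists s; exact Hs. }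
  set (Q := fun x => proj1_sig (constructive_indefinite_description _ (exQ x))).
  assert (HQ : forall x, infinite_sum (coef2 H P f x) (Q x)).
  { intro x. unfold Q. exact (proj2_sig (constructive_indefinite_description _ (exQ x))). }
  assert (HQb : forall x, A * nsq x <= Q x /\ Q x <= K * nsq x).
  { intro x. destruct (Hfr x) as [s [Hs Hb]]. rewrite (uniqueness_sum _ _ _ (HQ x) Hs). exact Hb. }
  set (C := fun y z => (Q (vadd H y z) - Q y - Q z) / 2).
  assert (HC : forall y z, infinite_sum (cc P f y z) (C y z)).
  { intros y z. pose proof (inf_sum_lin _ _ _ _ (1/2) (-1/2) (HQ (vadd H y z)) (HQ y)) as h1.
    pose proof (inf_sum_lin _ _ _ _ 1 (-1/2) h1 (HQ z)) as h2.
    unfold C. replace ((Q (vadd H y z) - Q y - Q z) / 2) with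
      (1 * (1 / 2 * Q (vadd H y z) + -1 / 2 * Q y) + -1 / 2 * Q z) by field.
    eapply inf_sum_ext; [|exact h2]. intro n. simpl. unfold cc. field. }
  assert (HQexp : forall y z t, Q (vadd H y (vscal H (rs t) z)) = Q y + 2 * t * C y z + t * t * Q z).
  { intros y z t. apply (uniqueness_sum (coef2 H P f (vadd H y (vscal H (rs t) z)))); [apply HQ|].
    pose proof (inf_sum_lin _ _ _ _ 1 (2 * t) (HQ y) (HC y z)) as h1.
    pose proof (inf_sum_lin _ _ _ _ 1 (t * t) h1 (HQ z)) as h2.
    replace (Q y + 2 * t * C y z + t * t * Q z) with (1 * (1 * Q y + 2 * t * C y z) + t * t * Q z) by ring.
    eapply inf_sum_ext; [|exact h2]. intro n. simpl. rewrite q_expand. ring. }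
  set (phi := fun y => Q y - 2 * Re (inner H g y)).
  assert (Hlow : forall y, - nsq g / A <= phi y).
  { intro y. pose proof (nsq_add_rs g y (- A)). pose proof (nsq_nonneg (vadd H g (vscal H (rs (- A)) y))).
    destruct (HQb y) as [h _]. unfold phi.
    assert (A * (Q y - 2 * Re (inner H g y)) >= - nsq g) by nra.
    apply (Rmult_le_reg_l A); [exact HA|].
    replace (A * (- nsq g / A)) with (- nsq g) by (field; lra). lra. }
  set (eta := eps / (4 * K)).
  assert (Heta : 0 < eta) by (unfold eta; apply Rdiv_lt_0_compat; lra).
  assert (Hmin : exists y, forall y', phi y < phi y' + eta).
  { set (E := fun r => exists y, r = - phi y).
    assert (Hb : bound E).
    { exists (nsq g / A). intros r [y ->]. pose proof (Hlow y).
      replace (- nsq g / A) with (- (nsq g / A)) in H0 by (field; lra). lra. }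
    destruct (completeness E Hb (ex_intro _ (- phi (vzero H)) (ex_intro _ (vzero H) eq_refl))) as [m [Hm1 Hm2]].
    destruct (classic (exists y, m - eta < - phi y)) as [[y Hy]|Hn].
    - exists y. intro y'. assert (- phi y' <= m) by (apply Hm1; exists y'; reflexivity). lra.
    - exfalso. assert (m <= m - eta); [|lra]. apply Hm2. intros r [y ->].
      apply Rnot_lt_le. intro h. apply Hn. exists y. exact h. }
  destruct Hmin as [y Hy].
  destruct (cv_psum _ _ (HQ y) eta Heta) as [N HN].
  exists N. intros M HM. exists (vM P f y M). split.
  { intros L HL. apply vM_spanned. exact HL. }
  set (v := vM P f y M). set (z := vsub H g v).
  set (D := C y z - Re (inner H g z)).
  assert (Hphi : forall t, - eta < 2 * t * D + t * t * Q z).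
  { intro t. pose proof (Hy (vadd H y (vscal H (rs t) z))) as h. unfold phi in h.
    rewrite HQexp, inner_add_r, inner_scal_r in h. unfold phi in h. cxs. unfold D. nra. }
  destruct (HQb z) as [HQz1 HQz2].
  assert (HD : Rabs D <= eta * K + nsq z / 4).
  { apply (quad_bound D (Q z) eta K (nsq z) HK); try assumption.
    pose proof (nsq_nonneg z). nra. }
  set (T := Q y - psum (coef2 H P f y) M).
  assert (HT : 0 <= T < eta).
  { pose proof (HN M HM). pose proof (psum_le_lim _ _ M (coef2_nonneg P f y) (HQ y)).
    unfold T. split; [lra|]. rewrite Rabs_minus_sym, Rabs_right in H0 by lra. lra. }
  assert (Htail : Rabs (C y z - psum (cc P f y z) M) <= K * T + nsq z / 4).
  { apply (lim_dist _ _ _ _ M (HC y z)). intros N' HN'.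
    replace N' with (M + (N' - M))%nat by lia.
    pose proof (tail_bound P f y z K M HK (N' - M)).
    pose proof (psum_le_lim _ _ (M + (N' - M)) (coef2_nonneg P f y) (HQ y)).
    pose proof (psum_le_lim _ _ (M + (N' - M)) (coef2_nonneg P f z) (HQ z)).
    pose proof (psum_nonneg (coef2 H P f z) M (coef2_nonneg P f z)).
    assert ((psum (coef2 H P f z) (M + (N' - M)) - psum (coef2 H P f z) M) / (4 * K) <= nsq z / 4).
    { apply (Rmult_le_reg_l (4 * K)); [lra|].
      replace (4 * K * ((psum (coef2 H P f z) (M + (N' - M)) - psum (coef2 H P f z) M) / (4 * K)))
        with (psum (coef2 H P f z) (M + (N' - M)) - psum (coef2 H P f z) M) by (field; lra).
      nra. }
    unfold T. nra. }
  assert (Hz : nsq z = Re (inner H g z) - psum (cc P f y z) M).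
  { rewrite <- (vM_inner P f y z M). fold v. unfold nsq at 1. unfold z at 1. unfold vsub.
    rewrite inner_add, inner_opp_l. cxs. ring. }
  assert (nsq z <= 2 * eta * K + 2 * K * T).
  { assert (- D <= Rabs D) by (rewrite <- Rabs_Ropp; apply Rle_abs).
    assert (C y z - psum (cc P f y z) M <= Rabs (C y z - psum (cc P f y z) M)) by apply Rle_abs.
    unfold D in *. lra. }
  assert (eta * K = eps / 4) by (unfold eta; field; lra).
  nra.
Qed.


Lemma lsum_ext {A} (g h : A -> R) l : (forall a, g a = h a) -> lsum g l = lsum h l.
Proof. intro E; induction l; simpl; [reflexivity|rewrite E, IHl; reflexivity]. Qed.

Lemma nat_above (x : R) : exists N : nat, x <= INR N.
Proof.
  destruct (archimed x) as [h1 _]. exists (Z.to_nat (up x)).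
  destruct (Z_lt_le_dec (up x) 0) as [hz|hz].
  - apply IZR_lt in hz. pose proof (pos_INR (Z.to_nat (up x))). lra.
  - rewrite INR_IZR_INZ, Z2Nat.id by exact hz. lra.
Qed.

Lemma ON_nsq {H : CInnerSpace} (ys : list H) : ON ys -> forall y, In y ys -> nsq y = 1.
Proof.
  intros HO. induction HO as [|u ys HO IH Hu Huu]; intros y Hy; [destruct Hy|].
  destruct Hy as [<-|Hy]; [unfold nsq; rewrite Huu; reflexivity|apply IH; exact Hy].
Qed.

Lemma combine_M (Pr : nat -> nat -> Prop) (l : list nat) :
  (forall s, In s l -> exists M0, forall M, (M0 <= M)%nat -> Pr s M) ->
  exists M0, forall M, (M0 <= M)%nat -> forall s, In s l -> Pr s M.
Proof.
  induction l as [|a l IH]; intros Hl.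
  - exists O. intros M _ s [].
  - destruct (Hl a (or_introl eq_refl)) as [Ma Ha].
    destruct IH as [Ml Hml]; [intros; apply Hl; right; assumption|].
    exists (Nat.max Ma Ml). intros M HM s [<-|Hs].
    + apply Ha. lia.
    + apply Hml; [lia|exact Hs].
Qed.

Lemma vsub_self {H : CInnerSpace} (x : H) : vsub H x x = vzero H.
Proof. apply vadd_opp. Qed.

Theorem main_thm (H : CInnerSpace) (f : nat -> H) (B : R)
  (Hinf : infinite_dimensional H)
  (Hframe : frame H f) (HB : optimal_upper_frame_bound H f B)
  (Hconv : exists l : R, infinite_sum (fun n => B - (hnorm H (f n))^2) l) :
  near_Riesz_basis H f.
Proof.
  split; [exact Hframe|].
  pose proof (B_ufb f B HB) as Hub.
  pose proof (B_pos f B Hinf Hframe Hub) as HBp.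
  pose proof (nsq_f_le f B Hub HBp) as Hnf.
  destruct Hconv as [lL HlL].
  assert (HlLb : forall M, psum (fun n => B - nsq (f n)) M <= lL).
  { intro M. unfold psum. rewrite (lsum_ext _ (fun n => B - (hnorm H (f n))^2)) by (intro; rewrite hnorm2; reflexivity).
    apply psum_le_lim; [|exact HlL]. intro n. rewrite hnorm2. pose proof (Hnf n). lra. }
  destruct (nat_above (2 * lL / B)) as [N HN].
  exists N. intros Sd HS l0 Hnd Hin.
  set (P := fun n => negb (Sd n)).
  destruct (frame_nsq P f HS) as [A [BP [HA Hfr]]].
  set (K := Rabs BP + 1).
  assert (HK : 0 < K) by (unfold K; pose proof (Rabs_pos BP); lra).
  assert (Hfr' : forall x, exists s, infinite_sum (coef2 H P f x) s /\ A * nsq x <= s /\ s <= K * nsq x).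
  { intro x. destruct (Hfr x) as [s [h1 [h2 h3]]]. exists s. split; [exact h1|split; [exact h2|]].
    pose proof (nsq_nonneg x). pose proof (Rle_abs BP). unfold K. nra. }
  destruct (combine_M (fun s M => (s < M)%nat /\ exists v,
     (forall L, (forall n, (n < M)%nat -> P n = true -> In (f n) L) -> spanned L v)
     /\ nsq (vsub H (f s) v) <= B / 2) l0) as [M Hall].
  { intros s _. destruct (approx P f A K HA HK Hfr' (f s) (B / 2)) as [M0 HM0]; [lra|].
    exists (Nat.max M0 (s + 1)). intros M HM. split; [lia|]. apply HM0. lia. }
  specialize (Hall M (Nat.le_refl M)).
  set (inl := fun n => if in_dec Nat.eq_dec n l0 then true else false).
  set (idx := filter (fun n => negb (inl n)) (seq 0 M)).
  set (hs := map f idx).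
  assert (HL : forall n, (n < M)%nat -> P n = true -> In (f n) hs).
  { intros n Hn HPn. unfold hs. apply in_map. unfold idx. apply filter_In. split.
    - apply in_seq. lia.
    - unfold inl. destruct (in_dec Nat.eq_dec n l0) as [hi|hi]; [|reflexivity].
      unfold P in HPn. rewrite (Hin n hi) in HPn. discriminate. }
  destruct (GS hs) as [ys [HO [Hlen Hsp]]].
  assert (Hpt : forall n, In n (seq 0 M) ->
    nsq (f n) <= lsum (fun y => Cnorm2 (inner H (f n) y)) ys + (if inl n then B / 2 else 0)).
  { intros n Hn. apply in_seq in Hn. unfold inl. destruct (in_dec Nat.eq_dec n l0) as [hi|hi].
    - destruct (Hall n hi) as [_ [v [Hv1 Hv2]]].
      pose proof (key_ineq ys (f n) v HO (spanned_trans _ _ _ (Hv1 hs HL) Hsp)). lra.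
    - assert (Hfs : spanned ys (f n)).
      { apply Hsp. unfold hs. apply in_map. unfold idx. apply filter_In. split; [apply in_seq; lia|].
        unfold inl. destruct (in_dec Nat.eq_dec n l0); [contradiction|reflexivity]. }
      pose proof (key_ineq ys (f n) (f n) HO Hfs). rewrite vsub_self, nsq_vzero in H0. lra. }
  apply lsum_le in Hpt. rewrite lsum_plus, lsum_ind in Hpt.
  rewrite lsum_swap in Hpt.
  assert (Hys : lsum (fun y => lsum (fun n => Cnorm2 (inner H (f n) y)) (seq 0 M)) ys <= B * INR (length ys)).
  { rewrite <- lsum_const. apply lsum_le. intros y Hy.
    rewrite (lsum_ext _ (fun n => Cnorm2 (inner H y (f n)))) by (intro; rewrite inner_conj, Cnorm2_conj; reflexivity).
    pose proof (Bupper_psum f B Hub (Rlt_le _ _ HBp) y M). unfold psum in H0.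
    rewrite (ON_nsq ys HO y Hy) in H0. lra. }
  set (c := length (filter inl (seq 0 M))).
  assert (Hc : (length idx + c = M)%nat).
  { pose proof (filter_length inl (seq 0 M)). rewrite length_seq in H0. unfold idx, c. lia. }
  assert (Hlc : (length l0 <= c)%nat).
  { apply NoDup_incl_length; [exact Hnd|]. intros s Hs. apply filter_In. split.
    - apply in_seq. destruct (Hall s Hs). lia.
    - unfold inl. destruct (in_dec Nat.eq_dec s l0); [reflexivity|contradiction]. }
  assert (Hlhs : length hs = length idx) by (unfold hs; apply length_map).
  pose proof (HlLb M) as HM. unfold psum in HM. rewrite lsum_minus, lsum_const, length_seq in HM.
  assert (HI1 : INR (length ys) <= INR (length idx)) by (apply le_INR; lia).
  assert (HI2 : INR (length idx) + INR c = INR M) by (rewrite <- plus_INR; f_equal; lia).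
  assert (HI3 : INR (length l0) <= INR c) by (apply le_INR; lia).
  assert (B * INR (length ys) <= B * INR (length idx)) by (apply Rmult_le_compat_l; lra).
  assert (B / 2 * INR (length l0) <= B / 2 * INR c) by (apply Rmult_le_compat_l; lra).
  assert (HI : B / 2 * INR (length l0) <= lL).
  { replace (INR (length idx)) with (INR M - INR c) in * by lra. fold c in Hpt. nra. }
  apply INR_le. apply (Rle_trans _ (2 * lL / B)); [|exact HN].
  apply (Rmult_le_reg_l (B / 2)); [lra|].
  replace (B / 2 * (2 * lL / B)) with lL by (field; lra). exact HI.
Qed.


Theorem proposition3p4 (H : CInnerSpace) (f : nat -> H) (B : R)
  (Hcomplete : complete H) (Hsep : separable H) (Hinf : infinite_dimensional H)
  (Hframe : frame H f) (HB : optimal_upper_frame_bound H f B)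
  (Hconv : exists l : R, infinite_sum (fun n => B - (hnorm H (f n))^2) l) :
  near_Riesz_basis H f.
Proof.
  exact (main_thm H f B Hinf Hframe HB Hconv).
Qed.
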